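(* Let $A$ and $B$ be non-coprime nonzero integers, let $g=\gcd(A,B)$, and write $A=ga$, $B=gb$ (so $\gcd(a,b)=1$). Let $L$ be a positive integer, let $\ell=\prod_{p\nmid g}p^{\nu_p(L)}$ and $\gamma(L)=\max_{p\mid g}\left\lceil \nu_p(L)/\nu_p(g)\right\rceil$. Then the following are equivalent: (i) there exists a positive integer $K$ with $L\mid(A^K+B^K)$; (ii) there exists a positive integer $\kappa\ge\gamma(L)$ with $\ell\mid(a^{\kappa}+b^{\kappa})$; (iii) there exists a positive integer $k$ with $\ell\mid(a^k+b^k)$.
   Context: $\nu_p(n)$ denotes the $p$-adic valuation of a nonzero integer $n$; products and maxima indexed by $p$ range over primes. $\lceil x\rceil$ is the least integer $\ge x$. *)

(* Defs.v *)
From mathcomp Require Import all_boot all_order all_algebra.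
Set Implicit Arguments. Unset Strict Implicit. Unset Printing Implicit Defensive.
Import Order.TTheory GRing.Theory Num.Theory.

Definition gcd_nat (A B : int) : nat := gcdn `|A|%N `|B|%N.

Definition ceildiv (m n : nat) : nat := (m + n.-1) %/ n.

(* ell = prod_{p prime, p not dividing g} p^{nu_p(L)}; primes p > L contribute p^0 = 1 *)
Definition ell (L g : nat) : nat :=
  \prod_(p < L.+1 | prime p && ~~ (p %| g)) p ^ logn p L.

(* gamma(L) = max_{p prime, p | g} ceil(nu_p(L)/nu_p(g)); primes dividing g are <= g *)
Definition gamma (L g : nat) : nat :=
  \max_(p < g.+1 | prime p && (p %| g)) ceildiv (logn p L) (logn p g).

(* Main.v *)
Require Import Defs.
From mathcomp Require Import all_boot all_order all_algebra.
From mathcomp Require Import zify ring.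
Import Order.TTheory GRing.Theory Num.Theory.


Lemma ell_part (L g : nat) : ell L g = L`_[pred p | ~~ (p %| g)].
Proof.
rewrite /ell /partn big_mkord [RHS]big_mkcond [LHS]big_mkcond /=.
apply: eq_bigr => i _; rewrite !inE.
case pr: (prime i) => //=.
by case: ifP => // _; rewrite lognE pr.
Qed.

Lemma ell_dvd (L g : nat) : (ell L g %| L)%N.
Proof. by rewrite ell_part dvdn_part. Qed.

Lemma ell_coprime (L g : nat) : (0 < g)%N -> coprime (ell L g) g.
Proof.
move=> g0; rewrite ell_part.
have := coprime_partC [pred p | ~~ (p %| g)] L g.
rewrite (@part_pnat_id _ g) //; apply/(pnatP _ g0) => p _ pg.
by rewrite !inE pg.
Qed.

Lemma key (L g k : nat) : (0 < L)%N -> (0 < g)%N -> (gamma L g <= k)%N ->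
  (L %| g ^ k * ell L g)%N.
Proof.
move=> L0 g0 hk; apply/dvdn_partP => // p; rewrite mem_primes => /and3P[pr _ pL].
rewrite p_part.
case pg: (p %| g).
  apply: dvdn_mulr; rewrite pfactor_dvdn ?expn_gt0 ?g0 // lognX.
  have lg : (0 < logn p g)%N by rewrite logn_gt0 mem_primes pr g0 pg.
  have hp : (p < g.+1)%N by rewrite ltnS dvdn_leq.
  have := @leq_bigmax_cond _ (fun q : 'I_g.+1 => prime q && (q %| g))
     (fun q : 'I_g.+1 => ceildiv (logn q L) (logn q g)) (Ordinal hp).
  rewrite /= pr pg => /(_ isT) hc.
  have hc2 : (ceildiv (logn p L) (logn p g) <= k)%N.
    by apply: leq_trans hc _; exact hk.
  apply: leq_trans (leq_mul hc2 (leqnn _)).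
  rewrite /ceildiv.
  set e := logn p g; set m := logn p L.
  have := ltn_ceil (m + e.-1) lg; rewrite mulSn.
  move: ((m + e.-1) %/ e * e) => X; clear -lg; lia.
apply: dvdn_mull.
apply: dvdn_trans (dvdn_part p (ell L g)).
rewrite ell_part partn_part; first by rewrite p_part.
by move=> q; rewrite !inE => /eqP ->; rewrite pg.
Qed.

Local Open Scope ring_scope.

Lemma odd_dvd (x y : int) (m : nat) : odd m -> (x + y %| x ^+ m + y ^+ m)%Z.
Proof.
move=> hm; have := subrXX x (- y) m.
rewrite opprK exprNn -signr_odd hm expr1 mulN1r opprK => ->.
exact: dvdz_mulr.
Qed.

Lemma dvdz_nat (n : nat) (x : int) : (n%:Z %| x)%Z = (n %| `|x|)%N.
Proof. by rewrite dvdzE absz_nat. Qed.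

Theorem lemma3p3 (A B : int) (L : nat) :
  A != 0 -> B != 0 -> ~~ coprimez A B -> (0 < L)%N ->
  let g : nat := gcd_nat A B in
  let a : int := (A %/ g%:Z)%Z in
  let b : int := (B %/ g%:Z)%Z in
  ((exists K : nat, (0 < K)%N /\ (L%:Z %| A ^+ K + B ^+ K)%Z) <->
   (exists kappa : nat, (0 < kappa)%N /\ (gamma L g <= kappa)%N /\
      ((ell L g)%:Z %| a ^+ kappa + b ^+ kappa)%Z)) /\
  ((exists kappa : nat, (0 < kappa)%N /\ (gamma L g <= kappa)%N /\
      ((ell L g)%:Z %| a ^+ kappa + b ^+ kappa)%Z) <->
   (exists k : nat, (0 < k)%N /\ ((ell L g)%:Z %| a ^+ k + b ^+ k)%Z)).
Proof.
move=> A0 B0 _ L0 g a b.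
have g0 : (0 < g)%N by rewrite /g /gcd_nat gcdn_gt0 absz_gt0 A0.
have hA : A = a * g%:Z by rewrite /a divzK // dvdz_nat dvdn_gcdl.
have hB : B = b * g%:Z by rewrite /b divzK // dvdz_nat dvdn_gcdr.
have hAB K : A ^+ K + B ^+ K = (a ^+ K + b ^+ K) * (g%:Z) ^+ K.
  by rewrite hA hB !exprMn mulrDl.
have cg K : coprime (ell L g) (g ^ K) by apply: coprimeXr; apply: ell_coprime.
have iii_ii : (exists k : nat, (0 < k)%N /\ ((ell L g)%:Z %| a ^+ k + b ^+ k)%Z) ->
   (exists kappa : nat, (0 < kappa)%N /\ (gamma L g <= kappa)%N /\
      ((ell L g)%:Z %| a ^+ kappa + b ^+ kappa)%Z).
  move=> [k [k0 hk]]; exists (k * (gamma L g).*2.+1)%N; split; first by rewrite muln_gt0 k0.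
  split; first by apply: leq_trans (leq_pmull _ k0); rewrite -addnn; lia.
  apply: dvdz_trans hk _; rewrite !exprM; apply: odd_dvd.
  by rewrite /= odd_double.
split; last first.
  split; last exact: iii_ii.
  by move=> [k [k0 [_ hk]]]; exists k.
split.
  move=> [K [K0 hK]]; apply: iii_ii; exists K; split => //.
  move: hK; rewrite hAB !dvdz_nat abszM abszX absz_nat => hK.
  rewrite -(Gauss_dvdl _ (cg K)).
  exact: dvdn_trans (ell_dvd L g) hK.
move=> [k [k0 [gk hk]]]; exists k; split => //.
rewrite hAB dvdz_nat abszM abszX absz_nat.
apply: dvdn_trans (key _ _ _ L0 g0 gk) _.
rewrite mulnC; apply: dvdn_mul => //.

Qed.
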